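(* Let $\mathbf d=(d_1,d_2)\in\mathbb{N}^2\setminus\{(0,0)\}$ and let $Q_{\mathbf d}$ be the set of quads of bi-degree exactly $\mathbf d$. Then $Q_{\mathbf d}$ is finite and nonempty and its elements have pairwise distinct sizes. Listing its elements in order of decreasing size, the sizes form a sequence of consecutive integers, and the points of $\mathbb{Z}[\gamma]$ they represent form a strictly decreasing sequence of positive real numbers. The element of largest size has size $d_1+d_2$ and represents $d_1+d_2\gamma^{-1}$; the element of smallest size represents $|d_1-d_2\gamma^{-1}|$. Every element of $Q_{\mathbf d}$ other than these two represents a point $m+n\gamma^{-1}$ ($m,n\in\mathbb{Z}$) with $|m|\le d_1$ and $|n|\le d_2-1$.
   Context: Let $f\colon\mathbb{Z}\to\mathbb{Z}$ be defined by $f(0)=f(1)=1$, $f(i+2)=f(i+1)+f(i)$ for all $i\in\mathbb{Z}$; $\gamma=(1+\sqrt5)/2$; $\mathbb{Z}[\gamma]=\mathbb{Z}\oplus\mathbb{Z}\gamma^{-1}$. A quad is a tuple $q=(i;a,b,c)$ of non-negative integers with $a\ge1$. It represents $\alpha\in\mathbb{Z}[\gamma]$ if $\alpha=a\gamma^{-i}+b\gamma^{-i-1}+c\gamma^{-i-2}$. Its bi-degree is $(d_1(q),d_2(q))$ with $d_1(q)=af(i-2)+bf(i-1)+cf(i)$ and $d_2(q)=af(i-1)+bf(i)+cf(i+1)$, and its size is $a+b+c$. *)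

(* Defs.v *)
From HB Require Import structures.
From mathcomp Require Import all_boot all_order all_algebra.
Set Implicit Arguments. Unset Strict Implicit. Unset Printing Implicit Defensive.
Import Order.TTheory GRing.Theory Num.Theory.
Local Open Scope ring_scope.

Fixpoint fib (n : nat) : nat :=
  match n with
  | 0 => 0
  | 1 => 1
  | (m.+1 as k).+1 => fib k + fib m
  end%N.

(* f : Z -> Z with f(0) = f(1) = 1 and f(i+2) = f(i+1) + f(i) for all i in Z.
   f(i) = Fib(i+1), extended to negative indices via
   Fib(-n) = (-1)^(n+1) Fib(n). *)
Definition f (i : int) : int :=
  match i with
  | Posz n => (fib n.+1)%:Z
  | Negz n => (-1) ^+ n.+1 * (fib n)%:Z
  end.

Definition quad := (nat * nat * nat * nat)%type.
Definition qi (q : quad) : nat := q.1.1.1.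
Definition qa (q : quad) : nat := q.1.1.2.
Definition qb (q : quad) : nat := q.1.2.
Definition qc (q : quad) : nat := q.2.
Definition is_quad (q : quad) : bool := (1 <= qa q)%N.

Definition deg1 (q : quad) : int :=
  (qa q)%:Z * f ((qi q)%:Z - 2) + (qb q)%:Z * f ((qi q)%:Z - 1)
  + (qc q)%:Z * f (qi q)%:Z.
Definition deg2 (q : quad) : int :=
  (qa q)%:Z * f ((qi q)%:Z - 1) + (qb q)%:Z * f (qi q)%:Z
  + (qc q)%:Z * f ((qi q)%:Z + 1).

Definition qsize (q : quad) : nat := (qa q + qb q + qc q)%N.

Definition gamma {R : rcfType} : R := (1 + Num.sqrt 5) / 2.

Definition qval {R : rcfType} (q : quad) : R :=
  (qa q)%:R * gamma ^- (qi q) + (qb q)%:R * gamma ^- (qi q).+1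
  + (qc q)%:R * gamma ^- (qi q).+2.

Lemma f_0 : f 0 = 1. Proof. by []. Qed.
Lemma f_1 : f 1 = 1. Proof. by []. Qed.
Lemma f_m1 : f (-1) = 0. Proof. by []. Qed.
Lemma f_m2 : f (-2) = 1. Proof. by []. Qed.
Lemma f_m3 : f (-3) = -1. Proof. by []. Qed.

(* Main.v *)
Require Import Defs.
From HB Require Import structures.
From mathcomp Require Import all_boot all_order all_algebra.
From Stdlib Require Import Ring Lia.
Import Order.TTheory GRing.Theory Num.Theory.

Ltac nlia := rewrite -?plusE -?minusE -?multE; lia.
Local Open Scope ring_scope.


Definition g (j : nat) : nat :=
  match j with 0 => 1 | 1 => 0 | k.+2 => fib k.+1 end%N.

Arguments g : simpl never.
Lemma gS j : g j.+2 = (g j.+1 + g j)%N.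
Proof. by case: j => [|[|j]] //; rewrite /g /= addnC. Qed.

Lemma fib_pos2 n : (0 < fib n.+1)%N /\ (0 < fib n.+2)%N.
Proof.
elim: n => [|n [H1 H2]] //; split => //.
by rewrite [fib _]/= ltn_addr.
Qed.
Lemma fib_pos n : (0 < fib n.+1)%N.
Proof. by case: (fib_pos2 n). Qed.

Lemma gpos j : (0 < g j.+2)%N.
Proof. exact: fib_pos. Qed.

Lemma fE j : f (j%:Z - 2) = (g j)%:Z.
Proof.
case: j => [|[|j]] //.
have -> : (j.+2)%:Z - 2 = j%:Z.
  by rewrite -[j.+2]addn2 PoszD addrK.
by [].
Qed.

Lemma fE1 i : f (i%:Z - 1) = (g i.+1)%:Z.
Proof. rewrite -fE; congr f; by rewrite -[i.+1]addn1 PoszD -addrA. Qed.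
Lemma fE2 i : f (i%:Z) = (g i.+2)%:Z.
Proof. by rewrite -fE -[i.+2]addn2 PoszD addrK. Qed.
Lemma fE3 i : f (i%:Z + 1) = (g i.+3)%:Z.
Proof. rewrite -fE; congr f; by rewrite -[i.+3]addn3 PoszD -addrA. Qed.

Definition D1 (q : quad) : nat :=
  (qa q * g (qi q) + qb q * g (qi q).+1 + qc q * g (qi q).+2)%N.
Definition D2 (q : quad) : nat :=
  (qa q * g (qi q).+1 + qb q * g (qi q).+2 + qc q * g (qi q).+3)%N.

Lemma deg1E q : deg1 q = (D1 q)%:Z.
Proof. by rewrite /deg1 fE fE1 fE2 /D1 !PoszD !PoszM. Qed.
Lemma deg2E q : deg2 q = (D2 q)%:Z.
Proof. by rewrite /deg2 fE1 fE2 fE3 /D2 !PoszD !PoszM. Qed.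

Local Close Scope ring_scope.



Definition step (q : quad) : quad :=
  let: (i, a, b, c) := q in
  if (2 <= a)%N then (i, a.-1, b.-1, c.+1)
  else if (2 <= b)%N then (i.+1, b.-1, c.+1, 0%N)
  else (i.+2, c.+1, 0%N, 0%N).

Fixpoint orb (n : nat) (q : quad) : seq quad :=
  if n is n'.+1 then q :: (if qb q == 0%N then [::] else orb n' (step q)) else [::].

Definition start (d1 d2 : nat) : quad :=
  if d1 == 0%N then (1, d2, 0, 0)%N else (0, d1, d2, 0)%N.

Lemma step_ok q : is_quad q -> qb q != 0%N ->
  [/\ is_quad (step q), D1 (step q) = D1 q, D2 (step q) = D2 q
    & (qsize (step q)).+1 = qsize q].
Proof.
case: q => [[[i a] b] c]; rewrite /is_quad /qb /qa /=.
case: a => [|[|a]] // _; case: b => [|[|b]] // _;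
  rewrite /step /= /D1 /D2 /qsize /qa /qb /qc /qi /=.
- rewrite !gS; split => //; nlia.
- rewrite !gS; split => //; nlia.
- rewrite !gS; split => //; nlia.
- rewrite !gS; split => //; nlia.
Qed.

Lemma start_ok d1 d2 : (d1, d2) != (0%N, 0%N) ->
  [/\ is_quad (start d1 d2), D1 (start d1 d2) = d1, D2 (start d1 d2) = d2
    & qsize (start d1 d2) = (d1 + d2)%N].
Proof.
move=> Hd; rewrite /start; case: (d1 =P 0%N) => [E|/eqP H]; first subst d1.
  rewrite /is_quad /D1 /D2 /qsize /qa /qb /qc /qi /=.
  have H2 : (0 < d2)%N by case: d2 Hd.
  rewrite /g /=; split; [by []|nlia|nlia|nlia].
rewrite /is_quad /D1 /D2 /qsize /qa /qb /qc /qi /=.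
rewrite /g /=; split; [by rewrite lt0n|nlia|nlia|nlia].
Qed.

Lemma size_bound q : is_quad q -> (qsize q <= D1 q + D2 q)%N.
Proof.
case: q => [[[i a] b] c]; rewrite /is_quad /D1 /D2 /qsize /qa /qb /qc /qi /= => _.
have := gpos i; have := gpos i.+1; have := gpos i.+2.
have := gS i; have := gS i.+1; have := gS i.+2.
move=> E1 E2 E3 /ssrnat.leP P1 /ssrnat.leP P2 /ssrnat.leP P3; apply/ssrnat.leP.
rewrite -?plusE -?minusE -?multE in E1 E2 E3 *; nia.
Qed.

Lemma pred_ok d1 d2 q : (d1, d2) != (0%N, 0%N) -> is_quad q -> D1 q = d1 -> D2 q = d2 ->
  q != start d1 d2 ->
  exists p, [/\ is_quad p, D1 p = d1, D2 p = d2, qsize p = (qsize q).+1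
    & qb p != 0%N /\ step p = q].
Proof.
move=> Hd; case: q => [[[i a] b] c]; rewrite /is_quad /qa /=.
case: a => [|a] // _.
case: c => [|c].
  case: b => [|b].
    case: i => [|[|i]].
    - rewrite /D1 /D2 /qa /qb /qc /qi /g /= => <- <-.
      by rewrite /start /= ?muln0 ?addn0 ?muln1 /= eqxx.
    - rewrite /D1 /D2 /qa /qb /qc /qi /g /= => <- <-.
      by rewrite /start /= ?muln0 ?addn0 ?muln1 /= eqxx.
    - move=> H1 H2 _; exists (i, 1, 1, a)%N.
      rewrite /is_quad /step /= /qsize /qa /qb /qc /qi /=; split => //.
      + rewrite -H1 /D1 /qa /qb /qc /qi /= !gS; nlia.
      + rewrite -H2 /D2 /qa /qb /qc /qi /= !gS; nlia.
      + nlia.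
  case: i => [|i].
  - rewrite /D1 /D2 /qa /qb /qc /qi /g /= => <- <-.
    by rewrite /start /= ?muln0 ?addn0 ?muln1 /= eqxx.
  - move=> H1 H2 _; exists (i, 1, a.+2, b)%N.
    rewrite /is_quad /step /= /qsize /qa /qb /qc /qi /=; split => //.
    + rewrite -H1 /D1 /qa /qb /qc /qi /= !gS; nlia.
    + rewrite -H2 /D2 /qa /qb /qc /qi /= !gS; nlia.
    + nlia.
move=> H1 H2 _; exists (i, a.+2, b.+1, c)%N.
rewrite /is_quad /step /= /qsize /qa /qb /qc /qi /=; split => //.
+ rewrite -H1 /D1 /qa /qb /qc /qi /= !gS; nlia.
+ rewrite -H2 /D2 /qa /qb /qc /qi /= !gS; nlia.
+ nlia.
Qed.

Lemma quad_size q : is_quad q -> (0 < qsize q)%N.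
Proof. by rewrite /is_quad /qsize => H; rewrite -addnA ltn_addr. Qed.

Lemma orbS n q : orb n.+1 q = q :: (if qb q == 0%N then [::] else orb n (step q)).
Proof. by []. Qed.

Lemma orb_mem n q : is_quad q -> qsize q = n -> forall p, p \in orb n q ->
  [/\ is_quad p, D1 p = D1 q & D2 p = D2 q].
Proof.
elim: n q => [|n IH] q Hq Hs p //=.
rewrite inE; case/orP => [/eqP -> //|].
case: (qb q =P 0%N) => [_|/eqP Hb Hp]; first by rewrite in_nil.
have [H1 H2 H3 H4] := @step_ok q Hq Hb.
have [] := IH _ H1 _ _ Hp; first by apply/eqP; rewrite -eqSS H4 Hs.
by rewrite H2 H3.
Qed.

Lemma orb_nth n q : is_quad q -> qsize q = n -> forall k, (k.+1 < size (orb n q))%N ->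
  nth q (orb n q) k.+1 = step (nth q (orb n q) k) /\ qb (nth q (orb n q) k) != 0%N.
Proof.
elim: n q => [|n IH] q Hq Hs k //=.
case: (qb q =P 0%N) => [_|/eqP Hb]; first by case: k.
have [H1 H2 H3 H4] := @step_ok q Hq Hb.
have Hn : qsize (step q) = n by apply/eqP; rewrite -eqSS H4 Hs.
case: k => [|k] /=.
  move=> Hk; split => //.
  case: n IH Hn Hs Hk => [|n] IH Hn Hs Hk; first by have := @quad_size _ H1; rewrite Hn.
  by [].
move=> Hk; have [E1 E2] := IH _ H1 Hn k Hk.
move: Hk; rewrite ltnS => Hk.
have Hk' : (k < size (orb n (step q)))%N by apply: ltnW.
by rewrite !(set_nth_default (step q) q).
Qed.

Lemma orb_size n q : is_quad q -> qsize q = n -> forall k, (k < size (orb n q))%N ->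
  (qsize (nth q (orb n q) k) + k)%N = n.
Proof.
move=> Hq Hs; elim=> [|k IH] Hk.
  by case: n Hs Hk => [|n] //= Hs _; rewrite addn0.
have [E1 E2] := @orb_nth n q Hq Hs k Hk.
have Hk' : (k < size (orb n q))%N by apply: ltnW.
have [Q1 _ _] := @orb_mem n q Hq Hs _ (mem_nth q Hk').
have [_ _ _ S1] := @step_ok _ Q1 E2.
by rewrite E1 addnS -addSn S1 (IH Hk').
Qed.

Lemma orb_last n q : is_quad q -> qsize q = n -> qb (last q (orb n q)) = 0%N.
Proof.
elim: n q => [|n IH] q Hq Hs; first by have := @quad_size _ Hq; rewrite Hs.
rewrite orbS /=; case: (qb q =P 0%N) => [//|/eqP Hb].
have [H1 _ _ H4] := @step_ok q Hq Hb.
have Hn : qsize (step q) = n by apply/eqP; rewrite -eqSS H4 Hs.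
have := IH _ H1 Hn.
case: n {IH} Hn Hs => [|n] Hn Hs; first by have := @quad_size _ H1; rewrite Hn.
by [].
Qed.

Lemma orb_closed n q : is_quad q -> qsize q = n -> forall p, p \in orb n q ->
  qb p != 0%N -> step p \in orb n q.
Proof.
elim: n q => [|n IH] q Hq Hs p //.
rewrite orbS inE; case/orP => [/eqP ->|].
  move=> Hb; rewrite (negbTE Hb) inE.
  have [H1 _ _ H4] := @step_ok q Hq Hb.
  have Hn : qsize (step q) = n by apply/eqP; rewrite -eqSS H4 Hs.
  case: n {IH} Hn Hs => [|n] Hn Hs; first by have := @quad_size _ H1; rewrite Hn.
  by rewrite orbS inE eqxx orbT.
case: (qb q =P 0%N) => [_|/eqP Hb Hp Hpb]; first by rewrite in_nil.
have [H1 _ _ H4] := @step_ok q Hq Hb.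
have Hn : qsize (step q) = n by apply/eqP; rewrite -eqSS H4 Hs.
by rewrite inE (IH _ H1 Hn p Hp Hpb) orbT.
Qed.

Lemma head_in q : is_quad q -> q \in orb (qsize q) q.
Proof.
move=> Hq; have := @quad_size _ Hq.
by case: (qsize q) => [|n] //= _; rewrite inE eqxx.
Qed.

Lemma complete d1 d2 q : (d1, d2) != (0%N, 0%N) -> is_quad q -> D1 q = d1 -> D2 q = d2 ->
  q \in orb (d1 + d2) (start d1 d2).
Proof.
move=> Hd; have [S1 S2 S3 S4] := @start_ok d1 d2 Hd.
suff: forall k q, is_quad q -> D1 q = d1 -> D2 q = d2 -> (d1 + d2 - qsize q)%N = k ->
  q \in orb (d1 + d2) (start d1 d2).
  by move=> H Hq H1 H2; exact: (H _ q Hq H1 H2 erefl).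
elim=> [|k IH] {}q Hq H1 H2 Hk.
  case: (q =P start d1 d2) => [->|/eqP Hne]; first by rewrite -{1}S4 head_in.
  have [p [P1 P2 P3 P4 _]] := @pred_ok d1 d2 q Hd Hq H1 H2 Hne.
  have := @size_bound p P1; rewrite P2 P3 P4 => /ssrnat.leP Hle; exfalso; move: Hk Hle.
  nlia.
have Hne : q != start d1 d2.
  by apply/eqP => E; move: Hk; rewrite E S4 subnn.
have [p [P1 P2 P3 P4 [P5 P6]]] := @pred_ok d1 d2 q Hd Hq H1 H2 Hne.
rewrite -P6; apply: (@orb_closed _ _ S1 S4) => //.
apply: IH => //; rewrite P4; move: Hk; nlia.
Qed.

Set Implicit Arguments.
Section Gen.
Variables (T : Type) (z o : T) (ad mu sb : T -> T -> T) (op : T -> T).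
Hypothesis RT : @ring_theory T z o ad mu sb op eq.
Add Ring RR : RT.
Local Notation "a ⊕ b" := (ad a b) (at level 50, left associativity).
Local Notation "a ⊗ b" := (mu a b) (at level 40, left associativity).
Local Notation "a ⊖ b" := (ad a (op b)) (at level 50, left associativity).
Local Notation "⊝ a" := (op a) (at level 35, right associativity).

Lemma G_gamma r h f t : f = o ⊕ o ⊕ o ⊕ o ⊕ o -> t = o ⊕ o -> r ⊗ r = f -> h ⊗ t = o ->
  (o ⊕ r) ⊗ h ⊗ ((o ⊕ r) ⊗ h) = (o ⊕ r) ⊗ h ⊕ o.
Proof.
move=> -> -> Hr Hh.
transitivity ((o ⊕ r) ⊗ h ⊕ o ⊕ h ⊗ h ⊗ (r ⊗ r ⊖ (o ⊕ o ⊕ o ⊕ o ⊕ o))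
  ⊕ (h ⊗ (o ⊕ o) ⊖ o) ⊗ ((o ⊕ o ⊕ o ⊕ r) ⊗ h ⊕ o)); first ring.
rewrite Hr Hh; ring.
Qed.

Lemma G_x x gm : gm ⊗ gm = gm ⊕ o -> x ⊗ gm = o -> x ⊗ x ⊕ x = o.
Proof.
move=> H1 H2.
transitivity (o ⊖ x ⊗ x ⊗ (gm ⊗ gm ⊖ (gm ⊕ o)) ⊕ (x ⊗ gm ⊖ o) ⊗ (x ⊗ gm ⊕ o ⊖ x)); first ring.
rewrite H1 H2; ring.
Qed.

Lemma G_rec x X : x ⊗ x ⊕ x = o -> x ⊗ (x ⊗ X) ⊕ x ⊗ X = X.
Proof. move=> H; transitivity ((x ⊗ x ⊕ x) ⊗ X); first ring. rewrite H; ring. Qed.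

Lemma G_E s X Y Z a b x : Z ⊕ Y = X -> s ⊗ X = a ⊖ b ⊗ x -> (⊝ s) ⊗ Y = b ⊖ (b ⊕ a) ⊗ x ->
  s ⊗ Z = (b ⊕ a) ⊖ ((b ⊕ a) ⊕ b) ⊗ x.
Proof.
move=> hZ h1 h2.
transitivity (s ⊗ X ⊕ (⊝ s) ⊗ Y ⊕ s ⊗ (Z ⊕ Y ⊖ X)); first ring.
rewrite hZ h1 h2; ring.
Qed.

Lemma G_val s A B C X Y Z G0 G1 G2 G3 x :
  s ⊗ X = G0 ⊖ G1 ⊗ x -> (⊝ s) ⊗ Y = G1 ⊖ G2 ⊗ x -> s ⊗ Z = G2 ⊖ G3 ⊗ x ->
  s ⊗ (A ⊗ X ⊕ B ⊗ Y ⊕ C ⊗ Z) =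
  (A ⊗ G0 ⊕ C ⊗ G2 ⊖ B ⊗ G1) ⊖ (A ⊗ G1 ⊕ C ⊗ G3 ⊖ B ⊗ G2) ⊗ x.
Proof.
move=> h1 h2 h3.
transitivity (A ⊗ (s ⊗ X) ⊖ B ⊗ ((⊝ s) ⊗ Y) ⊕ C ⊗ (s ⊗ Z)); first ring.
rewrite h1 h2 h3; ring.
Qed.

Lemma G_d1 A B C X Y Z : Z ⊕ Y = X ->
  (o ⊕ (o ⊕ A)) ⊗ X ⊕ (o ⊕ B) ⊗ Y ⊕ C ⊗ Z = ((o ⊕ A) ⊗ X ⊕ B ⊗ Y ⊕ (o ⊕ C) ⊗ Z) ⊕ (Y ⊕ Y).
Proof. move=> h; rewrite -h; ring. Qed.

Lemma G_d2 B C X Y Z W : Z ⊕ Y = X ->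
  (o ⊕ z) ⊗ X ⊕ (o ⊕ (o ⊕ B)) ⊗ Y ⊕ C ⊗ Z = ((o ⊕ B) ⊗ Y ⊕ (o ⊕ C) ⊗ Z ⊕ z ⊗ W) ⊕ (Y ⊕ Y).
Proof. move=> h; rewrite -h; ring. Qed.

Lemma G_d3 C X Y Z W V : Z ⊕ Y = X ->
  (o ⊕ z) ⊗ X ⊕ (o ⊕ z) ⊗ Y ⊕ C ⊗ Z = ((o ⊕ C) ⊗ Z ⊕ z ⊗ W ⊕ z ⊗ V) ⊕ (Y ⊕ Y).
Proof. move=> h; rewrite -h; ring. Qed.

Lemma G_mid s U V U' V' x :
  s ⊗ ((U ⊖ V) ⊖ (U' ⊖ V') ⊗ x) = s ⊗ (U ⊖ V) ⊕ (⊝ (s ⊗ (U' ⊖ V'))) ⊗ x.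
Proof. ring. Qed.
End Gen.
Unset Implicit Arguments.
Local Open Scope ring_scope.

Lemma RTg (R : comNzRingType) : @ring_theory R 0 1 +%R *%R (fun x y => x - y) -%R eq.
Proof. split=> //=; [exact: add0r|exact: addrC|exact: addrA|exact: mul1r|exact: mulrC|exact: mulrA|exact: mulrDl|move=> x; exact: subrr]. Qed.

Section Real.
Variable R : rcfType.
Local Notation x := ((gamma : R)^-1).

Lemma gamma_gt0 : 0 < (gamma : R).
Proof.
rewrite /gamma divr_gt0 ?ltr0n //.
by apply: ltr_wpDr (sqrtr_ge0 _) ltr01.
Qed.

Lemma gamma2 : (gamma : R) * gamma = gamma + 1.
Proof.
rewrite /gamma; apply: (@G_gamma _ _ _ _ _ _ _ (RTg R) (Num.sqrt 5) (2^-1) 5 2).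
- by rewrite -!natr1 add0r.
- by rewrite -!natr1 add0r.
- by rewrite -expr2 sqr_sqrtr // ler0n.
- by rewrite mulVf // pnatr_eq0.
Qed.

Lemma x_gt0 : 0 < x.
Proof. by rewrite invr_gt0 gamma_gt0. Qed.

Lemma xg : x * gamma = 1.
Proof. by rewrite mulVf // gt_eqF // gamma_gt0. Qed.

Lemma xx : x * x + x = 1.
Proof. apply: (G_x (RTg R)); [exact: gamma2 | exact: xg]. Qed.

Lemma xrec j : x ^+ j.+2 + x ^+ j.+1 = x ^+ j.
Proof. rewrite !exprS; apply: (G_rec (RTg R)); exact: xx. Qed.

Lemma signS j : (-1) ^+ j.+1 = - ((-1) ^+ j : R).
Proof. by rewrite exprS mulN1r. Qed.

Lemma xE j : (-1) ^+ j * x ^+ j = (g j)%:R - (g j.+1)%:R * x.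
Proof.
suff: (-1) ^+ j * x ^+ j = (g j)%:R - (g j.+1)%:R * x /\
      (-1) ^+ j.+1 * x ^+ j.+1 = (g j.+1)%:R - (g j.+2)%:R * x by case.
elim: j => [|j [H1 H2]].
  by rewrite /g /= !mul1r mulN1r expr1 sub0r expr0 mul0r subr0.
split=> //.
rewrite !signS opprK !gS !natrD.
rewrite signS gS natrD in H2.
apply: (G_E (RTg R)); [exact: xrec | exact: H1 | exact: H2].
Qed.

Lemma val_rep (i a b c : nat) :
  (-1) ^+ i * qval (R := R) (i, a, b, c) =
  (((a * g i + c * g i.+2)%N%:R - (b * g i.+1)%N%:R)
   - ((a * g i.+1 + c * g i.+3)%N%:R - (b * g i.+2)%N%:R) * x).
Proof.
rewrite /qval /qa /qb /qc /qi /= -!exprVn !natrD !natrM.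
apply: (G_val (RTg R)).
- exact: xE.
- by rewrite -signS xE.
- by rewrite -[(-1) ^+ i](opprK) -!signS xE.
Qed.

Lemma qval_gt0 q : is_quad q -> 0 < qval (R := R) q.
Proof.
case: q => [[[i a] b] c]; rewrite /is_quad /qval /qa /qb /qc /qi /= -!exprVn => Ha.
have hx := x_gt0.
apply: ltr_wpDr; first by rewrite mulr_ge0 ?ler0n ?exprn_ge0 ?ltW.
apply: ltr_wpDr; first by rewrite mulr_ge0 ?ler0n ?exprn_ge0 ?ltW.
by rewrite mulr_gt0 ?ltr0n ?exprn_gt0.
Qed.

End Real.
Local Open Scope ring_scope.


Lemma normz_sub (u v : nat) :
  `|u%:Z - v%:Z| = (if (u <= v)%N then v - u else u - v)%N%:Z.
Proof.
rewrite -abszE; case: leqP => h; first by rewrite distnEr.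
by rewrite distnEl // ltnW.
Qed.

Lemma nz1 (u v : nat) : `|u%:Z - v%:Z| <= (u + v)%:Z.
Proof. rewrite normz_sub lez_nat; case: (leqP u v) => _; apply/ssrnat.leP; nlia. Qed.

Lemma nz2 (u v : nat) : (0 < u)%N -> (0 < v)%N ->
  `|u%:Z - v%:Z| <= (u + v)%:Z - 1.
Proof.
move=> /ssrnat.leP hu /ssrnat.leP hv.
have -> : (u + v)%:Z - 1 = (u + v - 1)%N%:Z by rewrite subzn //; apply/ssrnat.leP; nlia.
rewrite normz_sub lez_nat; case: (leqP u v) => _; apply/ssrnat.leP; nlia.
Qed.

Section Real2.
Variable R : rcfType.
Local Notation x := ((gamma : R)^-1).

Lemma step_dec q : is_quad q -> qb q != 0%N -> qval (R := R) (step q) < qval q.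
Proof.
case: q => [[[i a] b] c]; rewrite /is_quad /qb /qa /=.
have h := xrec R i.
have hY : 0 < x ^+ i.+1 + x ^+ i.+1 by rewrite addr_gt0 // exprn_gt0 // x_gt0.
case: a => [|[|a]] // _; case: b => [|[|b]] // _;
  rewrite /step /= /qval /qa /qb /qc /qi /= -!exprVn -!nat1r ?mulr0n.
- rewrite (G_d3 (RTg R) _ _ _ (x ^+ i.+3) (x ^+ i.+4) h); apply: ltr_pwDr hY _; exact: lexx.
- rewrite (G_d2 (RTg R) _ _ _ _ (x ^+ i.+3) h); apply: ltr_pwDr hY _; exact: lexx.
- rewrite (G_d1 (RTg R) _ _ _ _ _ h); apply: ltr_pwDr hY _; exact: lexx.
- rewrite (G_d1 (RTg R) _ _ _ _ _ h); apply: ltr_pwDr hY _; exact: lexx.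
Qed.

Lemma last_val q d1 d2 : is_quad q -> qb q = 0%N -> D1 q = d1 -> D2 q = d2 ->
  qval (R := R) q = `|d1%:R - d2%:R * x|.
Proof.
case: q => [[[i a] b] c]; rewrite /qb /= => Hq -> H1 H2.
have E := val_rep R i a 0 c.
rewrite !mul0n mulr0n !subr0 in E.
move: H1 H2; rewrite /D1 /D2 /qa /qb /qc /qi /= !mul0n !addn0 => <- <-.
by rewrite -E normrMsign gtr0_norm // qval_gt0.
Qed.

Lemma mid_val q d1 d2 : is_quad q -> qb q != 0%N -> (0 < qi q)%N || (0 < qc q)%N ->
  D1 q = d1 -> D2 q = d2 ->
  exists m n : int, qval (R := R) q = m%:~R + n%:~R * x /\
    `|m| <= d1%:Z /\ `|n| <= d2%:Z - 1.
Proof.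
case: q => [[[i a] b] c]; rewrite /qb /qi /qc /is_quad /qa /= => Ha Hb Hic H1 H2.
set u := (a * g i + c * g i.+2)%N; set v := (b * g i.+1)%N.
set u' := (a * g i.+1 + c * g i.+3)%N; set v' := (b * g i.+2)%N.
exists ((-1) ^+ i * (u%:Z - v%:Z)), (- ((-1) ^+ i * (u'%:Z - v'%:Z))).
split; last split.
- rewrite -[qval _](signrMK i) val_rep.
  rewrite intrN !intrM !intr_sign !intrB -!pmulrn.
  exact: (G_mid (RTg R)).
- rewrite normrMsign -H1 /D1 /qa /qb /qc /qi /=.
  have -> : (a * g i + b * g i.+1 + c * g i.+2 = u + v)%N by rewrite /u /v; nlia.
  exact: nz1.
- rewrite normrN normrMsign -H2 /D2 /qa /qb /qc /qi /=.
  have -> : (a * g i.+1 + b * g i.+2 + c * g i.+3 = u' + v')%N by rewrite /u' /v'; nlia.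
  apply: nz2.
    rewrite /u'; case/orP: Hic => h.
      case: i h {u v u' v' H1 H2} => [|i] // _.
      by rewrite ltn_addr // muln_gt0 Ha gpos.
    by rewrite ltn_addl // muln_gt0 h gpos.
  by rewrite /v' muln_gt0 lt0n Hb gpos.
Qed.
End Real2.
Local Open Scope ring_scope.

Theorem mainTheorem18 (R : rcfType) (d1 d2 : nat) :
  (d1, d2) != (0%N, 0%N) ->
  exists s : seq quad,
    [/\ (* s enumerates exactly Q_d (hence Q_d is finite) *)
        (forall q : quad, q \in s <-> (is_quad q /\ (deg1 q, deg2 q) = (d1%:Z, d2%:Z))),
        (* Q_d is nonempty *)
        s != [::],
        (* listed by decreasing size, sizes are consecutive integers
           (in particular pairwise distinct) *)
        (forall k : nat, (k.+1 < size s)%N ->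
          (qsize (nth (0,0,0,0)%N s k.+1)).+1 = qsize (nth (0,0,0,0)%N s k)) /\
        (* the represented points are positive and strictly decreasing *)
        (forall q, q \in s -> 0 < qval (R := R) q) /\
        (forall k : nat, (k.+1 < size s)%N ->
          qval (R := R) (nth (0,0,0,0)%N s k.+1) < qval (nth (0,0,0,0)%N s k)),
        (* the element of largest size *)
        qsize (head (0,0,0,0)%N s) = (d1 + d2)%N /\
        qval (R := R) (head (0,0,0,0)%N s) = d1%:R + d2%:R * gamma^-1 /\
        (* the element of smallest size *)
        qval (R := R) (last (0,0,0,0)%N s) = `|d1%:R - d2%:R * gamma^-1|
      & (* all other elements *)
        forall k : nat, (0 < k < (size s).-1)%N ->
          exists m n : int,
            qval (R := R) (nth (0,0,0,0)%N s k) = m%:~R + n%:~R * gamma^-1 /\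
            `|m| <= d1%:Z /\ `|n| <= d2%:Z - 1].
Proof.
move=> Hd.
have [S1 S2 S3 S4] := @start_ok d1 d2 Hd.
set q0 := start d1 d2 in S1 S2 S3 S4 *.
set n := (d1 + d2)%N in S4 *.
have Hn : (0 < n)%N by rewrite -S4 quad_size.
have Hmem := @orb_mem n q0 S1 S4.
have Hnth := @orb_nth n q0 S1 S4.
set s := orb n q0 in Hmem Hnth *.
have Hs : s = q0 :: (if qb q0 == 0%N then [::] else orb n.-1 (step q0)).
  by rewrite /s; case: (n) Hn.
have nthE k : (k < size s)%N -> nth (0,0,0,0)%N s k = nth q0 s k.
  by move=> hk; apply: set_nth_default.
have Hmemk k : (k < size s)%N -> [/\ is_quad (nth q0 s k), D1 (nth q0 s k) = d1
    & D2 (nth q0 s k) = d2].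
  by move=> hk; have [] := Hmem _ (mem_nth q0 hk); rewrite S2 S3.
exists s; split.
- move=> q; split.
    move=> /Hmem [h1 h2 h3]; split => //.
    by rewrite deg1E deg2E h2 h3 S2 S3.
  case=> hq; rewrite deg1E deg2E => -[h1 h2].
  exact: (@complete d1 d2 q Hd hq h1 h2).
- by rewrite Hs.
- split; last split.
  + move=> k hk; have hk' : (k < size s)%N by apply: ltnW.
    rewrite !nthE //; have [E1 E2] := Hnth k hk.
    have [Q1 _ _] := Hmemk k hk'.
    by rewrite E1; case: (@step_ok _ Q1 E2).
  + by move=> q /Hmem [h1 _ _]; apply: qval_gt0.
  + move=> k hk; have hk' : (k < size s)%N by apply: ltnW.
    rewrite !nthE //; have [E1 E2] := Hnth k hk.
    have [Q1 _ _] := Hmemk k hk'.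
    by rewrite E1; apply: step_dec.
- split; last split.
  + by rewrite Hs /= S4.
  + rewrite Hs /= /q0 /start; case: (d1 =P 0%N) => [->|_].
      by rewrite /qval /qa /qb /qc /qi /= expr1 !mulr0n !mul0r !addr0 add0r.
    by rewrite /qval /qa /qb /qc /qi /= expr0 expr1 invr1 mulr1 !mulr0n mul0r addr0.
  + have Hl : last (0,0,0,0)%N s \in s by rewrite Hs /= mem_last.
    have Hl' : last (0,0,0,0)%N s = last q0 s by rewrite Hs.
    have [L1 L2 L3] := Hmem _ Hl.
    apply: last_val => //; last by rewrite L3.
      by rewrite Hl' /s; apply: orb_last.
    by rewrite L2.
- move=> k /andP [hk0 hk].
  have hk1 : (k.+1 < size s)%N by move: hk; case: (size s) => //= m; rewrite ltnS.
  have hk' : (k < size s)%N by apply: ltnW.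
  rewrite nthE //; have [_ E2] := Hnth k hk1.
  have [Q1 Q2 Q3] := Hmemk k hk'.
  apply: mid_val => //.
  have Hsz := @orb_size n q0 S1 S4 k hk'.
  move: Q1 Q2 Q3 E2 Hsz; rewrite -/s.
  case: (nth q0 s k) => [[[i a] b] c]; rewrite /qi /qc /=.
  case: i => [|i] //; case: c => [|c] //; rewrite orbb.
  rewrite /D1 /D2 /qsize /qa /qb /qc /qi /g /= => _ H1 H2 _ hsz.
  move/ssrnat.leP: hk0 => hk0; exfalso; move: hsz H1 H2; rewrite /n.
  rewrite -?plusE -?minusE -?multE; lia.
Qed.
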